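(* Let $G$ be the full group of a Bratteli diagram $B$ whose path space $X$ is a Cantor set and such that $G$ acts minimally on $X$. If $G$ is a simple non-trivial group, then $B$ can be telescoped so that in the new diagram each pair of vertices from consecutive levels is connected by an even number (at least two) of edges.
   Context: A Bratteli diagram $B=(V,E)$: finite vertex sets $V_0=\{v_0\},V_1,\dots$, finite edge sets $E_1,E_2,\dots$, maps $s:E_i\to V_{i-1}$, $r:E_i\to V_i$ with $r(E_i)=V_i$, $s^{-1}(v)\ne\emptyset$ for all $v$, $r^{-1}(v)\ne\emptyset$ for $v\ne v_0$. Path space $X$: infinite paths $(e_1,e_2,\dots)$ from $v_0$, topologized by cylinder sets. $G_n$: homeomorphisms of $X$ that change only the first $n$ edges of each path, replacing $(e_1,\dots,e_n)$ by a path from $v_0$ ending at $r(e_n)$ (depending only on $(e_1,\dots,e_n)$); full group $G=\bigcup_nG_n$. A telescope of $B$ along $0=m_0<m_1<\cdots$ is the diagram $B'$ with $V'_n=V_{m_n}$ and $E'_n$ the set of finite paths of $B$ between levels $m_{n-1}$ and $m_n$ (it has the same path space and the same full group). *)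

(* Defs.v *)
From mathcomp Require Import all_boot.
Set Implicit Arguments. Unset Strict Implicit. Unset Printing Implicit Defensive.

(* A Bratteli diagram.  Level-shift convention: [E n] is the (finite) set of
   edges between level n and level n+1 (the paper's E_{n+1});
   [src e : V n], [rng e : V n.+1]. *)
Record bratteli := Bratteli {
  V : nat -> finType;
  E : nat -> finType;
  src : forall n, E n -> V n;
  rng : forall n, E n -> V n.+1;
  V0_single : #|V 0| = 1;
  rng_onto : forall n (w : V n.+1), exists e : E n, rng e = w;
  src_onto : forall n (v : V n), exists e : E n, src e = v
}.

Section Bratteli.
Variable B : bratteli.

Definition path := {x : forall n, E B n | forall n, rng (x n) = src (x n.+1)}.

Definition cyl (n : nat) (x : path) : path -> Prop :=
  fun y => forall k, k < n -> sval y k = sval x k.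

Definition open_set (U : path -> Prop) : Prop :=
  forall x, U x -> exists n, forall y, cyl n x y -> U y.

Definition continuous_map (f : path -> path) : Prop :=
  forall U, open_set U -> open_set (fun x => U (f x)).

Definition homeomorphism (f : path -> path) : Prop :=
  exists g : path -> path,
    cancel f g /\ cancel g f /\ continuous_map f /\ continuous_map g.

(* X is a Cantor set.  The path space with the cylinder topology is always
   compact, metrizable and totally disconnected; so it is a Cantor set iff it
   is nonempty and has no isolated points. *)
Definition cantor_path_space : Prop :=
  inhabited path /\
  forall (x : path) n, exists y : path, cyl n x y /\ y <> x.

Definition in_Gn (n : nat) (g : path -> path) : Prop :=
  [/\ homeomorphism g,
      forall x k, n <= k -> sval (g x) k = sval x k &
      forall x y, cyl n x y -> cyl n (g x) (g y)].

Definition in_G (g : path -> path) : Prop := exists n, in_Gn n g.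

Definition G_minimal : Prop :=
  forall (x y : path) n, exists g, in_G g /\ cyl n y (g x).

Definition normal_subgroup_of_G (N : (path -> path) -> Prop) : Prop :=
  [/\ forall h, N h -> in_G h,
      N id,
      forall h1 h2, N h1 -> N h2 -> N (h1 \o h2),
      forall h h', N h -> in_G h' -> cancel h h' -> cancel h' h -> N h' &
      forall g g' h, in_G g -> in_G g' -> cancel g g' -> cancel g' g ->
        N h -> N (g \o h \o g')].

Definition G_simple_nontrivial : Prop :=
  (exists g, in_G g /\ exists x, g x <> x) /\
  forall N, normal_subgroup_of_G N ->
    (forall h, N h -> forall x, h x = x) \/ (forall g, in_G g -> N g).

Definition same_vertex (a b : nat) (v : V B a) (w : V B b) : bool :=
  match a =P b with
  | ReflectT H => eq_rect a (fun l => Finite.sort (V B l)) v b H == w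
  | ReflectF _ => false
  end.

(* number of finite paths from v in V a down to w in V b (0 if b < a, and 1
   or 0 if a = b according as v = w); for a < b these are exactly the edges
   between v and w in a telescope of B having a and b as consecutive levels *)
Fixpoint npaths (a : nat) (v : V B a) (b : nat) : V B b -> nat :=
  match b with
  | 0 => fun w => same_vertex v w
  | b'.+1 => fun w =>
      if a <= b' then \sum_(e : E B b' | rng e == w) npaths v (src e)
      else same_vertex v w
  end.

Definition telescopable_even : Prop :=
  exists m : nat -> nat,
    [/\ m 0 = 0,
        forall n, m n < m n.+1 &
        forall n (v : V B (m n)) (w : V B (m n.+1)),
          2 <= npaths v w /\ ~~ odd (npaths v w)].

End Bratteli.

(* Main.v *)
Require Import Defs.
From mathcomp Require Import all_boot all_fingroup.
From Stdlib Require Import ClassicalEpsilon FunctionalExtensionality ProofIrrelevance Classical.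
Set Implicit Arguments. Unset Strict Implicit. Unset Printing Implicit Defensive.

Section Fiber.
Variables (A Bt : finType).

Definition liftf (b : Bt) (s : {perm A}) (x : A * Bt) : A * Bt :=
  if x.2 == b then (s x.1, x.2) else x.
Lemma liftf_inj b s : injective (liftf b s).
Proof.
move=> [x1 x2] [y1 y2]; rewrite /liftf /=.
case: eqP => [->|nx]; case: eqP => [->|ny] // [].
- by move=> /perm_inj -> .
- by move=> _ e; case: ny; rewrite -e.
- by move=> _ e; case: nx; rewrite e.
Qed.
Definition liftp b s : {perm A * Bt} := perm (@liftf_inj b s).

Lemma liftpE b s x : liftp b s x = liftf b s x. Proof. by rewrite permE. Qed.

Lemma liftpM b s t : liftp b (s * t)%g = (liftp b s * liftp b t)%g.
Proof.
apply/permP => [[x1 x2]]; rewrite permM !liftpE /liftf /=.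
by case: (x2 =P b) => [->|ne] /=; rewrite ?eqxx ?permM // (introF eqP ne).
Qed.
Lemma liftp1 b : liftp b 1%g = 1%g.
Proof. apply/permP => [[x1 x2]]; by rewrite liftpE /liftf /= !perm1; case: ifP. Qed.

Lemma liftp_tperm b x y : liftp b (tperm x y) = tperm (x, b) (y, b).
Proof.
apply/permP => [[z1 z2]]; rewrite liftpE /liftf /=.
case: eqP => [->|nz].
  case: tpermP => [->|->|nx ny]; first by rewrite tpermL.
    by rewrite tpermR.
  rewrite tpermD //; apply/eqP => [[]] //.
    by move=> e; case: nx.
  by move=> e; case: ny.
rewrite tpermD //; apply/eqP => [[]] _ e; by case: nz.
Qed.

Lemma liftp_odd b s : odd_perm (liftp b s) = odd_perm s.
Proof.
case: (prod_tpermP s) => ts -> dts.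
rewrite (big_morph (liftp b) (@liftpM b) (liftp1 b)).
under eq_bigr => t _ do rewrite liftp_tperm.
rewrite -(big_map (fun t => ((t.1, b), (t.2, b))) xpredT (fun t => tperm t.1 t.2)).
rewrite !odd_perm_prod ?size_map //.
rewrite all_map; apply: sub_all dts => [[x y]] /=.
by rewrite /dpair /= => nxy; apply/eqP => [[]] e; move: nxy; rewrite e eqxx.
Qed.

Variable sg : Bt -> {perm A}.
Definition fibf (r : seq Bt) (x : A * Bt) : A * Bt :=
  if x.2 \in r then (sg x.2 x.1, x.2) else x.
Lemma fibf_inj r : injective (fibf r).
Proof.
move=> [x1 x2] [y1 y2]; rewrite /fibf /=.
case: ifP => hx; case: ifP => hy [].
- by move=> e1 e2; subst; move/perm_inj: e1 => ->.
- by move=> _ e; subst; rewrite hx in hy.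
- by move=> _ e; subst; rewrite hx in hy.
- by move=> -> ->.
Qed.
Definition fibp r : {perm A * Bt} := perm (@fibf_inj r).

Lemma fibp_odd r : uniq r ->
  odd_perm (fibp r) = \big[addb/false]_(b <- r) odd_perm (sg b).
Proof.
elim: r => [|b r IH] /=.
  move=> _; rewrite big_nil.
  have -> : fibp [::] = 1%g by apply/permP => x; rewrite permE /fibf perm1.
  by rewrite odd_perm1.
case/andP => nb ur; rewrite big_cons -IH //.
have -> : fibp (b :: r) = (liftp b (sg b) * fibp r)%g.
  apply/permP => [[x1 x2]]; rewrite permM liftpE !permE /liftf /fibf /= inE.
  case: eqP => [->|nx] /=; first by rewrite (negbTE nb).
  by [].
by rewrite odd_permM liftp_odd.
Qed.

Lemma fib_odd (t : {perm A * Bt}) :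
  (forall a b, t (a, b) = (sg b a, b)) ->
  odd_perm t = \big[addb/false]_(b : Bt) odd_perm (sg b).
Proof.
move=> ht; have -> : t = fibp (enum Bt).
  by apply/permP => [[a b]]; rewrite permE /fibf /= mem_enum ht.
by rewrite fibp_odd ?enum_uniq // big_enum.
Qed.
End Fiber.

Section B1.
Variable B : bratteli.
Local Notation P := (Defs.path B).
Local Notation Vt n := (V B n).
Local Notation Et n := (E B n).

Definition emi := excluded_middle_informative.

Lemma path_ext (x y : P) : (forall n, sval x n = sval y n) -> x = y.
Proof.
case: x => x hx; case: y => y hy /= h.
have e : x = y by apply: functional_extensionality_dep.
subst; congr exist; apply: proof_irrelevance.
Qed.

Lemma V0_eq (u v : Vt 0) : u = v.
Proof.
have := V0_single B; move=> h.
have : #|V B 0| <= 1 by rewrite h.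
by move/fintype_le1P => /(_ u) ->.
Qed.

Lemma cyl_src m (x y : P) : cyl m x y -> src (sval x m) = src (sval y m).
Proof.
case: m => [|k] h; first exact: V0_eq.
by rewrite -(proj2_sig x k) -(proj2_sig y k) h.
Qed.

Lemma cyl_le k m (x y : P) : k <= m -> cyl m x y -> cyl k x y.
Proof. by move=> hk h i hi; apply: h; apply: leq_trans hk. Qed.

Lemma cyl_sym m (x y : P) : cyl m x y -> cyl m y x.
Proof. by move=> h i hi; rewrite h. Qed.

Lemma cyl_trans m (x y z : P) : cyl m x y -> cyl m y z -> cyl m x z.
Proof. by move=> h1 h2 i hi; rewrite h2 // h1. Qed.

Definition chain (s : forall n, Et n) := forall n, rng (s n) = src (s n.+1).

Definition spl m (a b : forall n, Et n) : forall n, Et n :=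
  fun n => if n < m then a n else b n.

Lemma spl_ok m (a b : P) : src (sval a m) = src (sval b m) ->
  chain (spl m (sval a) (sval b)).
Proof.
move=> h n; rewrite /spl.
case: (ltngtP n.+1 m) => hn.
- exact: (proj2_sig a).
- exact: (proj2_sig b).
- by rewrite (proj2_sig a) hn.
Qed.

Definition mkspl m (a b : P) : P :=
  match emi (src (sval a m) = src (sval b m)) with
  | left h => exist _ (spl m (sval a) (sval b)) (spl_ok h)
  | right _ => b end.

Lemma mksplE m (a b : P) : src (sval a m) = src (sval b m) ->
  forall n, sval (mkspl m a b) n = if n < m then sval a n else sval b n.
Proof. by rewrite /mkspl => h n; case: emi. Qed.

Lemma mkspl_cyl m (a b : P) : src (sval a m) = src (sval b m) -> cyl m a (mkspl m a b).
Proof. by move=> h i hi; rewrite mksplE // hi. Qed.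

Lemma mkspl_tail m (a b : P) : src (sval a m) = src (sval b m) ->
  forall n, m <= n -> sval (mkspl m a b) n = sval b n.
Proof. by move=> h n hn; rewrite mksplE // ltnNge hn. Qed.

Lemma construct (Pr : forall n, Vt n -> Prop) :
  (forall v : Vt 0, Pr 0 v) ->
  (forall n (u : Vt n), Pr n u -> exists e : Et n, src e = u /\ Pr n.+1 (rng e)) ->
  exists x : P, forall n, Pr n (src (sval x n)).
Proof.
move=> h0 hs.
have H : forall n (u : Vt n), exists e : Et n, src e = u /\ (Pr n u -> Pr n.+1 (rng e)).
  move=> n u; case: (classic (Pr n u)) => hp.
    by case: (hs n u hp) => e [he hp']; exists e.
  by case: (src_onto u) => e he; exists e.
pose f n u := proj1_sig (constructive_indefinite_description _ (H n u)).
have hf n u : src (f n u) = u /\ (Pr n u -> Pr n.+1 (rng (f n u))).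
  exact: (proj2_sig (constructive_indefinite_description _ (H n u))).
have [d0 _] : exists d0 : Vt 0, True.
  have : 0 < #|V B 0| by rewrite V0_single.
  by case/card_gt0P => d _; exists d.
pose vs := fix vs n : Vt n := match n with 0 => d0 | k.+1 => rng (f k (vs k)) end.
have ch : forall n, rng (f n (vs n)) = src (f n.+1 (vs n.+1)).
  by move=> n; rewrite (proj1 (hf _ _)).
exists (exist _ (fun n => f n (vs n)) ch) => n /=.
rewrite (proj1 (hf _ _)).
elim: n => [|n IH] //=.
by apply: (proj2 (hf _ _)).
Qed.
End B1.

Section B2.
Variable B : bratteli.
Local Notation P := (Defs.path B).
Local Notation Vt n := (V B n).
Local Notation Et n := (E B n).

Lemma same_vertexE a (v w : Vt a) : same_vertex v w = (v == w).
Proof.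
rewrite /same_vertex; case: eqP => // H.
by rewrite (eq_irrelevance H (erefl a)).
Qed.

Lemma same_vertex_neq a b (v : Vt a) (w : Vt b) : a != b -> same_vertex v w = false.
Proof. by rewrite /same_vertex; case: eqP. Qed.

Lemma npaths_same a (v w : Vt a) : npaths v w = (v == w).
Proof.
case: a v w => [|a] v w /=; first by rewrite same_vertexE.
by rewrite ltnn same_vertexE.
Qed.

Lemma npathsS a b (v : Vt a) (w : Vt b.+1) : a <= b ->
  npaths v w = \sum_(e : Et b | rng e == w) npaths v (src e).
Proof. by move=> h /=; rewrite h. Qed.

Lemma npaths_lt a b (v : Vt a) (w : Vt b) : b < a -> npaths v w = 0.
Proof.
case: b w => [|b] w h /=.
  by rewrite same_vertex_neq // eq_sym neq_ltn h.
by rewrite leqNgt (ltnW h) /= same_vertex_neq // eq_sym neq_ltn h.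
Qed.

Lemma sum_same k (F : Vt k -> nat) (w : Vt k) :
  \sum_(u : Vt k) F u * npaths u w = F w.
Proof.
rewrite (bigD1 w) //= npaths_same eqxx muln1 big1 ?addn0 // => u hu.
by rewrite npaths_same (negbTE hu) muln0.
Qed.

Lemma npaths_comp a k b (v : Vt a) (w : Vt b) : a <= k -> k <= b ->
  npaths v w = \sum_(u : Vt k) npaths v u * npaths u w.
Proof.
elim: b w => [|b IH] w hak hkb.
  move: hkb; rewrite leqn0 => /eqP ek; subst k.
  by rewrite sum_same.
case: (ltngtP k b.+1) => hk.
- have hab : a <= b by apply: leq_trans hak _.
  rewrite npathsS //.
  under eq_bigr => e _ do rewrite (IH _ hak hk).
  rewrite exchange_big /=; apply: eq_bigr => u _.
  by rewrite (_ : k <= b = true) // big_distrr.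
- by move: hkb; rewrite leqNgt hk.
- by subst k; rewrite sum_same.
Qed.

Lemma npaths_pos_same a (v w : Vt a) : 0 < npaths v w -> v = w.
Proof. by rewrite npaths_same lt0b => /eqP. Qed.

Lemma npaths_path (x : P) n k : n <= k ->
  0 < npaths (src (sval x n)) (src (sval x k)).
Proof.
elim: k => [|k IH] hk.
  by move: hk; rewrite leqn0 => /eqP e; subst n; rewrite npaths_same eqxx.
case: (ltngtP n k.+1) => h.
- rewrite npathsS // (bigD1 (sval x k)) /=; last by rewrite (proj2_sig x).
  by rewrite ltn_addr // IH.
- by move: hk; rewrite leqNgt h.
- by subst n; rewrite npaths_same eqxx.
Qed.

Lemma npaths_last a b (v : Vt a) (w : Vt b.+1) : a <= b -> 0 < npaths v w ->
  exists e : Et b, rng e = w /\ 0 < npaths v (src e).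
Proof.
move=> h; rewrite npathsS // => hp.
case: (pickP (fun e : Et b => (rng e == w) && (0 < npaths v (src e)))).
  by move=> e /andP [/eqP he hp']; exists e.
move=> h0; move: hp; rewrite big1 // => e he.
by move: (h0 e); rewrite he /= lt0n => /negbT; rewrite negbK => /eqP.
Qed.

Lemma npaths_first a b (v : Vt a) (w : Vt b) : a < b -> 0 < npaths v w ->
  exists e : Et a, src e = v /\ 0 < npaths (rng e) w.
Proof.
move=> hab; rewrite (npaths_comp v w (leqnSn a) hab) => hp.
case: (pickP (fun u : Vt a.+1 => (0 < npaths v u) && (0 < npaths u w))).
  move=> u /andP [h1 h2].
  case: (npaths_last (leqnn a) h1) => e [he h3].
  by exists e; rewrite he (npaths_pos_same h3).
move=> h0; move: hp; rewrite big1 // => u _.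
move: (h0 u); case: (npaths v u) => [|p]; first by rewrite mul0n.
by case: (npaths u w) => [|q]; rewrite ?muln0.
Qed.

Lemma npaths_v0 (v0 : Vt 0) b (w : Vt b) : 0 < npaths v0 w.
Proof.
elim: b w => [|b IH] w; first by rewrite npaths_same (V0_eq v0 w) eqxx.
case: (rng_onto w) => e he.
by rewrite npathsS // (bigD1 e) /= ?he ?eqxx // ltn_addr.
Qed.

Lemma npaths_zero a b (v : Vt a) (e : Et b) : a <= b ->
  npaths v (rng e) = 0 -> npaths v (src e) = 0.
Proof.
move=> h; rewrite npathsS // (bigD1 e) ?eqxx //=.
by move/eqP; rewrite addn_eq0 => /andP [/eqP -> _].
Qed.

Lemma through2 n0 L (u : Vt n0) (w : Vt L) : n0 <= L -> 0 < npaths u w ->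
  exists z : P, src (sval z n0) = u /\ src (sval z L) = w.
Proof.
move=> hL hp.
pose Pr n (v : Vt n) := (n <= n0 -> 0 < npaths v u) /\ (n0 <= n <= L -> 0 < npaths v w).
have [z hz] : exists z : P, forall n, Pr n (src (sval z n)).
  apply: construct.
    move=> v; split => [_|]; first exact: npaths_v0.
    rewrite leqn0 => /andP [/eqP e _]; subst n0.
    by rewrite (V0_eq v u).
  move=> n v [h1 h2].
  case: (ltnP n n0) => hn.
    case: (npaths_first hn (h1 (ltnW hn))) => e [he hp']; exists e; split => //.
    split => // /andP [h3 h4].
    have en : n.+1 = n0 by apply/eqP; rewrite eqn_leq hn h3.
    subst n0; by rewrite (npaths_pos_same hp').
  case: (ltnP n L) => hnL.
    have hp1 : 0 < npaths v w by apply: h2; rewrite hn ltnW.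
    case: (npaths_first hnL hp1) => e [he hp']; exists e; split => //.
    split => [|_ //]; by rewrite leqNgt ltnS hn.
  case: (src_onto v) => e he; exists e; split => //; split.
    by rewrite leqNgt ltnS hn.
  by move=> /andP [_ h]; move: h; rewrite leqNgt ltnS hnL.
exists z; split.
  by case: (hz n0) => h1 _; apply: npaths_pos_same; apply: h1.
case: (hz L) => _ h2; apply: npaths_pos_same; apply: h2.
by rewrite hL leqnn.
Qed.
End B2.

Section B3.
Variable B : bratteli.
Local Notation P := (Defs.path B).
Local Notation Vt n := (V B n).
Local Notation Et n := (E B n).

Lemma Gtail m (g : P -> P) : in_Gn m g -> forall (x : P) k, m <= k -> sval (g x) k = sval x k.
Proof. by case. Qed.
Lemma Gcyl m (g : P -> P) : in_Gn m g -> forall x y : P, cyl m x y -> cyl m (g x) (g y).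
Proof. by case. Qed.
Lemma Ginj m (g : P -> P) : in_Gn m g -> injective g.
Proof. by case=> [[g' [h _]] _ _]; apply: can_inj h. Qed.
Lemma Gsrc m (g : P -> P) : in_Gn m g -> forall x : P, src (sval (g x) m) = src (sval x m).
Proof. by move=> h x; rewrite (Gtail h). Qed.

Lemma Gn_mono k m (g : P -> P) : k <= m -> in_Gn k g -> in_Gn m g.
Proof.
move=> hkm [hh ht hc]; split => // [x i hi|x y hxy i hi].
  by apply: ht; apply: leq_trans hi.
case: (ltnP i k) => hik.
  by apply: (hc x y (cyl_le hkm hxy)).
by rewrite !ht // hxy.
Qed.

Lemma Gn_id m : in_Gn m (@id P).
Proof.
split => //; exists id; do 2 (split; first by []).
by split; move=> U hU.
Qed.

Lemma Gn_comp m (g h : P -> P) : in_Gn m g -> in_Gn m h -> in_Gn m (g \o h).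
Proof.
move=> [[g' [c1 [c2 [c3 c4]]]] gt gc] [[h' [d1 [d2 [d3 d4]]]] ht hc].
split.
- exists (h' \o g'); split; first by move=> x /=; rewrite c1 d1.
  split; first by move=> x /=; rewrite d2 c2.
  split => U hU; first exact: (d3 _ (c3 _ hU)).
  exact: (c4 _ (d4 _ hU)).
- by move=> x k hk /=; rewrite gt // ht.
- by move=> x y hxy /=; apply: gc; apply: hc.
Qed.

Lemma in_G_comp (g h : P -> P) : in_G g -> in_G h -> in_G (g \o h).
Proof.
move=> [k1 h1] [k2 h2]; exists (maxn k1 k2); apply: Gn_comp.
  by apply: Gn_mono h1; rewrite leq_maxl.
by apply: Gn_mono h2; rewrite leq_maxr.
Qed.

Fixpoint FP (m : nat) : finType :=
  match m with 0 => unit | k.+1 => (FP k * Et k)%type end.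

Fixpoint pre (m : nat) (x : P) : FP m :=
  match m return FP m with 0 => tt | k.+1 => (pre k x, sval x k) end.

Lemma pre_cyl m (x y : P) : pre m x = pre m y <-> cyl m x y.
Proof.
elim: m => [|m IH] /=; first by split => // _ i.
split.
  case=> /IH h1 h2 i; rewrite ltnS leq_eqVlt => /orP [/eqP ->|hi] //.
  by apply: h1.
move=> h; rewrite (proj2 IH); last by apply: cyl_le h.
by rewrite h.
Qed.

Definition pick_path m (p : FP m) : option P :=
  match emi (exists x : P, pre m x = p) with
  | left h => Some (proj1_sig (constructive_indefinite_description _ h))
  | right _ => None end.
Arguments pick_path : clear implicits.

Lemma pick_spec m p : match pick_path m p with
  | Some y => pre m y = p | None => forall x, pre m x <> p end.
Proof.
rewrite /pick_path; case: emi => [h|h] /=.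
  exact: (proj2_sig (constructive_indefinite_description _ h)).
by move=> x e; apply: h; exists x.
Qed.

Definition rho m (g : P -> P) (w : Vt m) (p : FP m) : FP m :=
  match pick_path m p with
  | Some x => if src (sval x m) == w then pre m (g x) else p
  | None => p end.
Arguments rho : clear implicits.

Definition active m (w : Vt m) (p : FP m) :=
  exists x : P, pre m x = p /\ src (sval x m) = w.
Arguments active : clear implicits.

Lemma rho_pre m g w (x : P) : in_Gn m g ->
  rho m g w (pre m x) = if src (sval x m) == w then pre m (g x) else pre m x.
Proof.
move=> hg; rewrite /rho; have := pick_spec (pre m x).
case: pick_path => [y|] h; last by case: (h x).
have hc : cyl m y x by apply/pre_cyl.
rewrite (cyl_src hc); case: ifP => // _.
by apply/pre_cyl; apply: (Gcyl hg).
Qed.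

Lemma rho_nact m g w p : ~ active m w p -> rho m g w p = p.
Proof.
move=> hn; rewrite /rho; have := pick_spec p.
case: pick_path => [y|] // h; case: eqP => // e.
by case: hn; exists y.
Qed.

Lemma rho_act m g w (x : P) : in_Gn m g -> src (sval x m) = w ->
  rho m g w (pre m x) = pre m (g x).
Proof. by move=> hg e; rewrite rho_pre // e eqxx. Qed.

Lemma rho_key m g w p q : in_Gn m g -> active m w p -> rho m g w p = rho m g w q -> q = p.
Proof.
move=> hg [x [<- hx]]; rewrite rho_act //.
case: (classic (active m w q)) => [[y [<- hy]]|hq].
  rewrite rho_act // => /pre_cyl h; apply/pre_cyl.
  have hs : src (sval y m) = src (sval x m) by rewrite hx hy.
  pose z := mkspl m y x.
  have hyz : cyl m y z := mkspl_cyl hs.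
  have e : g z = g x.
    apply: path_ext => k; case: (ltnP k m) => hk.
      by rewrite (Gcyl hg hyz hk) h.
    by rewrite !(Gtail hg) // /z mkspl_tail.
  by move: hyz; rewrite /z -/z (Ginj hg e).
rewrite rho_nact // => e; case: hq; exists (g x); split => //.
by rewrite (Gsrc hg).
Qed.

Lemma rho_inj m g w : in_Gn m g -> injective (rho m g w).
Proof.
move=> hg p q e.
case: (classic (active m w p)) => hp; first by apply/esym; apply: rho_key e.
case: (classic (active m w q)) => hq; first by apply: rho_key hq (esym e).
by move: e; rewrite !rho_nact.
Qed.

Definition permOf m g (w : Vt m) : {perm FP m} :=
  match emi (injective (rho m g w)) with
  | left h => perm h | right _ => 1%g end.
Arguments permOf : clear implicits.

Lemma permOfE m g w p : in_Gn m g -> permOf m g w p = rho m g w p.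
Proof.
move=> hg; rewrite /permOf; case: emi => [h|h]; first by rewrite permE.
by case: h; apply: rho_inj.
Qed.

Definition S m g (w : Vt m) := odd_perm (permOf m g w).
Arguments S : clear implicits.

Lemma S_comp m g h w : in_Gn m g -> in_Gn m h -> S m (g \o h) w = S m g w (+) S m h w.
Proof.
move=> hg hh; rewrite /S.
have -> : permOf m (g \o h) w = (permOf m h w * permOf m g w)%g.
  apply/permP => p; rewrite permM !permOfE //; last exact: Gn_comp.
  case: (classic (active m w p)) => [[x [<- hx]]|hp].
    by rewrite (rho_act hh hx) (rho_act (Gn_comp hg hh) hx) (rho_act hg) // (Gsrc hh).
  by rewrite !rho_nact.
by rewrite odd_permM addbC.
Qed.

Lemma S_id m w : S m id w = false.
Proof.
rewrite /S; have -> : permOf m id w = 1%g; last by rewrite odd_perm1.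
apply/permP => p; rewrite permOfE ?perm1; last exact: Gn_id.
case: (classic (active m w p)) => [[x [<- hx]]|hp]; last by rewrite rho_nact.
by rewrite rho_act //; apply: Gn_id.
Qed.

Lemma ext_edge m (y : P) (e : Et m) : src (sval y m) = src e ->
  exists z : P, cyl m y z /\ sval z m = e.
Proof.
move=> hy.
have hp1 : 0 < npaths (rng e) (rng e) by rewrite npaths_same eqxx.
have [z' [_ hz']] := through2 (leqnn _) hp1.
pose s : forall n, Et n := fun n => if n < m then sval y n else
   match m =P n with ReflectT h => eq_rect m (fun k => Et k) e n h | ReflectF _ => sval z' n end.
have sm : s m = e.
  rewrite /s ltnn; case: eqP => // h; by rewrite (eq_irrelevance h (erefl m)).
have sgt : forall n, m < n -> s n = sval z' n.
  move=> n hn; rewrite /s ltnNge ltnW //=; case: eqP => // h.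
  by exfalso; move: hn; rewrite h ltnn.
have ch : forall n, rng (s n) = src (s n.+1).
  move=> n; case: (ltngtP n.+1 m) => hn.
  - by rewrite /s hn (ltnW hn) (proj2_sig y).
  - move: hn; rewrite ltnS leq_eqVlt => /orP [/eqP en|hn].
      by subst n; rewrite sm sgt.
    by rewrite !sgt // ?(proj2_sig z') // ltnW.
  - subst m; by rewrite sm /s ltnSn (proj2_sig y) hy.
exists (exist _ s ch); split => //= i hi.
by rewrite /= /s hi.
Qed.

Lemma S_rec m (g : P -> P) (w : Vt m.+1) : in_Gn m g ->
  S m.+1 g w = \big[addb/false]_(e : Et m | rng e == w) S m g (src e).
Proof.
move=> hg; have hg1 : in_Gn m.+1 g by apply: Gn_mono hg.
pose sg (e : Et m) := if rng e == w then permOf m g (src e) else 1%g.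
rewrite /S (@fib_odd (FP m) (Et m) sg (permOf m.+1 g w)).
  rewrite [RHS]big_mkcond /=; apply: eq_bigr => e _; rewrite /sg.
  by case: ifP => //; rewrite odd_perm1.
move=> a e; rewrite (@permOfE m.+1 g w (a, e) hg1).
case: (classic (active m.+1 w (a, e))) => [[x [hx hxw]]|hn].
  rewrite -[(a, e)]hx rho_act //=.
  case: hx => ha he.
  have hr : rng e == w by rewrite -he (proj2_sig x) hxw.
  rewrite /sg hr permOfE // -ha rho_act // ?he //.
  by rewrite (Gtail hg) // he.
rewrite rho_nact // /sg; case: ifP => hr; last by rewrite perm1.
rewrite permOfE // rho_nact // => [[y [hy hys]]].
case: (ext_edge hys) => z [hz ze]; apply: hn; exists z; split.
  by rewrite /= ze -hy; congr pair; apply/pre_cyl/cyl_sym.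
by rewrite -(proj2_sig z) ze; apply/eqP.
Qed.
End B3.
Arguments pick_path {B} m p.
Arguments rho {B} m g w p.
Arguments active {B} m w p.
Arguments permOf {B} m g w.
Arguments S {B} m g w.

Section B4.
Variable B : bratteli.
Local Notation P := (Defs.path B).
Local Notation Vt n := (V B n).
Local Notation Et n := (E B n).

Lemma cont_local (f : P -> P) m :
  (forall n x y, cyl (maxn n m) x y -> cyl n (f x) (f y)) -> continuous_map f.
Proof.
move=> hf U hU x hx; case: (hU _ hx) => n hn.
by exists (maxn n m) => y hy; apply: hn; apply: hf.
Qed.

Section Tau.
Variables (m : nat) (a b : P).
Hypothesis tl : forall k, m <= k -> sval a k = sval b k.
Hypothesis nab : ~ cyl m a b.

Definition tau (x : P) : P :=
  if emi (cyl m a x) then mkspl m b x else if emi (cyl m b x) then mkspl m a x else x.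

Lemma src_ab : src (sval a m) = src (sval b m).
Proof. by rewrite tl. Qed.

Lemma tau_a x : cyl m a x -> tau x = mkspl m b x.
Proof. by rewrite /tau; destruct (emi (cyl m a x)). Qed.
Lemma tau_b x : cyl m b x -> tau x = mkspl m a x.
Proof.
move=> h; rewrite /tau; destruct (emi (cyl m a x)) as [h'|h']; last by destruct (emi (cyl m b x)).
by case: nab; apply: cyl_trans h' (cyl_sym h).
Qed.
Lemma tau_n x : ~ cyl m a x -> ~ cyl m b x -> tau x = x.
Proof. by move=> h1 h2; rewrite /tau; destruct (emi (cyl m a x)) => //; destruct (emi (cyl m b x)). Qed.

Lemma srcb x : cyl m a x -> src (sval b m) = src (sval x m).
Proof. by move=> h; rewrite -src_ab; apply: cyl_src. Qed.
Lemma srca x : cyl m b x -> src (sval a m) = src (sval x m).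
Proof. by move=> h; rewrite src_ab; apply: cyl_src. Qed.

Lemma tau_tail x k : m <= k -> sval (tau x) k = sval x k.
Proof.
move=> hk; case: (classic (cyl m a x)) => ha.
  by rewrite tau_a // mkspl_tail // (srcb ha).
case: (classic (cyl m b x)) => hb.
  by rewrite tau_b // mkspl_tail // (srca hb).
by rewrite tau_n.
Qed.

Lemma tau_inv : cancel tau tau.
Proof.
move=> x; case: (classic (cyl m a x)) => ha.
  have hs := srcb ha.
  rewrite (tau_a ha) (tau_b (mkspl_cyl hs)).
  apply: path_ext => k; rewrite mksplE; last by rewrite mkspl_tail // (cyl_src ha).
  case: ifP => hk; first by rewrite ha.
  by rewrite mkspl_tail // leqNgt hk.
case: (classic (cyl m b x)) => hb.
  have hs := srca hb.
  rewrite (tau_b hb) (tau_a (mkspl_cyl hs)).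
  apply: path_ext => k; rewrite mksplE; last by rewrite mkspl_tail // (cyl_src hb).
  case: ifP => hk; first by rewrite hb.
  by rewrite mkspl_tail // leqNgt hk.
by rewrite !tau_n.
Qed.

Lemma tau_local n x y : cyl (maxn n m) x y -> cyl n (tau x) (tau y).
Proof.
move=> h; have hm : cyl m x y by apply: cyl_le h; rewrite leq_maxr.
move=> i hi; have hxy : sval y i = sval x i by apply: h; apply: leq_trans hi (leq_maxl _ _).
case: (classic (cyl m a x)) => ha.
  have ha' : cyl m a y := cyl_trans ha hm.
  rewrite (tau_a ha) (tau_a ha') (mksplE (srcb ha)) (mksplE (srcb ha')).
  by case: ifP => // _; rewrite hxy.
case: (classic (cyl m b x)) => hb.
  have hb' : cyl m b y := cyl_trans hb hm.
  rewrite (tau_b hb) (tau_b hb') (mksplE (srca hb)) (mksplE (srca hb')).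
  by case: ifP => // _; rewrite hxy.
rewrite !tau_n //.
- by move=> h'; apply: ha; apply: cyl_trans h' (cyl_sym hm).
- by move=> h'; apply: hb; apply: cyl_trans h' (cyl_sym hm).
Qed.

Lemma tau_G : in_Gn m tau.
Proof.
split.
- have hc : continuous_map tau by apply: (cont_local (m := m)); exact: tau_local.
  by exists tau; split; [exact: tau_inv|split; [exact: tau_inv|]].
- by move=> x k hk; apply: tau_tail.
- by move=> x y h; apply: tau_local; rewrite maxnn.
Qed.

Lemma tau_S0 (w : Vt m) : S m tau w = (w == src (sval a m)).
Proof.
rewrite /S; case: eqP => hw.
  have -> : permOf m tau w = tperm (pre m a) (pre m b).
    apply/permP => p; rewrite permOfE; last exact: tau_G.
    case: (classic (active m w p)) => [[x [<- hx]]|hp].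
      rewrite rho_act //; last exact: tau_G.
      case: (classic (cyl m a x)) => ha.
        rewrite tau_a // (proj2 (pre_cyl _ _ _) ha) tpermL.
        by apply/pre_cyl/cyl_sym/mkspl_cyl; apply: srcb.
      case: (classic (cyl m b x)) => hb.
        rewrite tau_b // (proj2 (pre_cyl _ _ _) hb) tpermR.
        by apply/pre_cyl/cyl_sym/mkspl_cyl; apply: srca.
      rewrite tau_n // tpermD //; apply/eqP => /pre_cyl h.
        by apply: ha.
      by apply: hb.
    rewrite rho_nact // tpermD //; apply/eqP => e.
      by apply: hp; exists a; split.
    by apply: hp; exists b; split => //; rewrite -src_ab.
  by rewrite odd_tperm; apply/eqP => /pre_cyl.
have -> : permOf m tau w = 1%g; last by rewrite odd_perm1.
apply/permP => p; rewrite permOfE ?perm1; last exact: tau_G.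
case: (classic (active m w p)) => [[x [<- hx]]|hp]; last by rewrite rho_nact.
rewrite rho_act //; last exact: tau_G.
rewrite tau_n // => h; apply: hw; rewrite -hx.
  by apply/esym/cyl_src.
by rewrite src_ab; apply/esym/cyl_src.
Qed.

Lemma tau_Sd d (w : Vt (d + m)) : S (d + m) tau w = odd (npaths (src (sval a m)) w).
Proof.
elim: d w => [|d IH] w.
  by rewrite tau_S0 npaths_same oddb eq_sym.
rewrite S_rec; last by apply: Gn_mono tau_G; rewrite leq_addl.
rewrite npathsS ?leq_addl //.
rewrite (big_morph odd oddD (erefl : odd 0 = false)); apply: eq_bigr => e _.
by rewrite IH.
Qed.

Lemma tau_S k (w : Vt k) : m <= k -> S k tau w = odd (npaths (src (sval a m)) w).
Proof.
move=> hk; have := @tau_Sd (k - m); rewrite subnK //; exact.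
Qed.
End Tau.

Definition Nset (h : P -> P) := in_G h /\
  exists k, forall M, k <= M -> in_Gn M h /\ forall w : Vt M, S M h w = false.

Lemma in_G_ge (g : P -> P) : in_G g -> exists k, forall M, k <= M -> in_Gn M g.
Proof. by case=> k hk; exists k => M hM; apply: Gn_mono hk. Qed.

Lemma N_normal : normal_subgroup_of_G Nset.
Proof.
split.
- by move=> h [].
- split; first by exists 0; apply: Gn_id.
  by exists 0 => M _; split; [apply: Gn_id|move=> w; apply: S_id].
- move=> h1 h2 [g1 [k1 H1]] [g2 [k2 H2]]; split; first exact: in_G_comp.
  exists (maxn k1 k2) => M hM.
  have [a1 b1] := H1 M (leq_trans (leq_maxl _ _) hM).
  have [a2 b2] := H2 M (leq_trans (leq_maxr _ _) hM).
  split; first exact: Gn_comp.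
  by move=> w; rewrite S_comp // b1 b2.
- move=> h h' [gh [k H]] gh' c1 c2; split => //.
  case: (in_G_ge gh') => k' H'.
  exists (maxn k k') => M hM.
  have [a1 b1] := H M (leq_trans (leq_maxl _ _) hM).
  have a2 := H' M (leq_trans (leq_maxr _ _) hM).
  split => // w.
  have e : h \o h' = id by apply: functional_extensionality => x /=; rewrite c2.
  have := S_comp w a1 a2; rewrite e S_id b1 /=.
  by move=> ->.
- move=> g g' h gg gg' c1 c2 [gh [k H]]; split.
    by apply: in_G_comp => //; apply: in_G_comp.
  case: (in_G_ge gg) => k1 H1; case: (in_G_ge gg') => k2 H2.
  exists (maxn k (maxn k1 k2)) => M hM.
  have [a1 b1] := H M (leq_trans (leq_maxl _ _) hM).
  have hM' := leq_trans (leq_maxr _ _) hM.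
  have a2 := H1 M (leq_trans (leq_maxl _ _) hM').
  have a3 := H2 M (leq_trans (leq_maxr _ _) hM').
  split; first by apply: Gn_comp => //; apply: Gn_comp.
  move=> w; rewrite S_comp //; last exact: Gn_comp.
  rewrite S_comp // b1 /=.
  have e : g \o g' = id by apply: functional_extensionality => x /=; rewrite c2.
  by have := S_comp w a2 a3; rewrite e S_id addbF => ->.
Qed.
End B4.

Lemma fin_unif (T : finType) (Pp : T -> nat -> Prop) :
  (forall t, exists K, forall M, K <= M -> Pp t M) ->
  exists K, forall t M, K <= M -> Pp t M.
Proof.
move=> H.
suff : forall s : seq T, exists K, forall t, t \in s -> forall M, K <= M -> Pp t M.
  by case/(_ (enum T)) => K HK; exists K => t M hM; apply: HK => //; rewrite mem_enum.
elim=> [|t s [K HK]]; first by exists 0.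
case: (H t) => K' HK'; exists (maxn K K') => t'; rewrite inE => /orP [/eqP ->|ht] M hM.
  by apply: HK'; apply: leq_trans hM; rewrite leq_maxr.
by apply: HK => //; apply: leq_trans hM; rewrite leq_maxl.
Qed.

Section B5.
Variable B : bratteli.
Local Notation P := (Defs.path B).
Local Notation Vt n := (V B n).
Local Notation Et n := (E B n).

Lemma diff_index (x y : P) : x <> y -> exists i, sval y i <> sval x i.
Proof.
move=> nxy; apply: NNPP => h; apply: nxy; apply: path_ext => i.
by apply: NNPP => h'; apply: h; exists i => e; apply: h'; rewrite e.
Qed.

Lemma three : cantor_path_space B -> G_minimal B ->
  exists m (a b c : P), (forall k, m <= k -> sval a k = sval b k) /\
    (forall k, m <= k -> sval a k = sval c k) /\
    ~ cyl m a b /\ ~ cyl m a c /\ ~ cyl m b c.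
Proof.
case=> [[x1] iso] hm.
case: (iso x1 0) => y [_ ny].
case: (diff_index ny) => i hi.
case: (iso x1 i.+1) => z [hz nz].
case: (diff_index nz) => j hj.
have hij : i < j.
  by rewrite ltnNge; apply/negP => hji; apply: hj; apply/esym; apply: (hz j); rewrite ltnS.
case: (hm x1 y j.+1) => g2 [[k2 G2] c2].
case: (hm x1 z j.+1) => g3 [[k3 G3] c3].
pose m := maxn j.+1 (maxn k2 k3).
have hjm : j.+1 <= m by rewrite leq_maxl.
have G2' : in_Gn m g2.
  by apply: Gn_mono G2; rewrite /m (leq_trans _ (leq_maxr _ _)) // leq_maxl.
have G3' : in_Gn m g3.
  by apply: Gn_mono G3; rewrite /m (leq_trans _ (leq_maxr _ _)) // leq_maxr.
have him : i < m by apply: leq_trans hjm; rewrite ltnS ltnW.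
exists m, x1, (g2 x1), (g3 x1); split; first by move=> k hk; rewrite (Gtail G2').
split; first by move=> k hk; rewrite (Gtail G3').
split.
  move=> h; apply: hi; rewrite -(c2 i) ?h //; by apply: leq_trans hij _.
split.
  move=> h; apply: hj; rewrite -(c3 j) ?h //.
move=> h; apply: hi; rewrite -(c2 i); last by apply: leq_trans hij _.
rewrite -h // (c3 i); last by apply: leq_trans hij _.
by rewrite hz.
Qed.

Lemma NG : cantor_path_space B -> G_minimal B -> G_simple_nontrivial B ->
  forall g : P -> P, in_G g -> Nset g.
Proof.
move=> hc hm [_ hs]; case: (hs _ (@N_normal B)) => // htriv.
exfalso.
case: (three hc hm) => m [a [b [c [tab [tac [nab [nac nbc]]]]]]].
pose h := tau m a b \o tau m a c.
have Gh : in_Gn m h by apply: Gn_comp; apply: tau_G.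
have Nh : Nset h.
  split; first by exists m.
  exists m => M hM; split; first by apply: Gn_mono Gh.
  move=> w; rewrite S_comp; try by apply: Gn_mono hM (tau_G _ _).
  by rewrite (tau_S tab nab) // (tau_S tac nac) // addbb.
have := htriv h Nh a; rewrite /h /=.
have haa : cyl m a a by [].
rewrite (tau_a c haa).
have hs' : src (sval c m) = src (sval a m) by rewrite -tac.
have hcy : cyl m c (mkspl m c a) := mkspl_cyl hs'.
rewrite tau_n //.
- by move=> e; apply: nac; apply: cyl_sym; move: hcy; rewrite e.
- by move=> h'; apply: nac; apply: cyl_trans h' (cyl_sym hcy).
- by move=> h'; apply: nbc; apply: cyl_trans h' (cyl_sym hcy).
Qed.
End B5.

Section B6.
Variable B : bratteli.
Local Notation P := (Defs.path B).
Local Notation Vt n := (V B n).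
Local Notation Et n := (E B n).
Hypotheses (hc : cantor_path_space B) (hm : G_minimal B) (hs : G_simple_nontrivial B).

Lemma even_two L (a b : P) : src (sval a L) = src (sval b L) -> ~ cyl L a b ->
  exists K, forall M, K <= M -> forall w : Vt M, ~~ odd (npaths (src (sval a L)) w).
Proof.
move=> hab nab.
pose b' := mkspl L b a.
have tl : forall k, L <= k -> sval a k = sval b' k by move=> k hk; rewrite mkspl_tail.
have nab' : ~ cyl L a b'.
  move=> h; apply: nab; apply: cyl_trans h (cyl_sym (mkspl_cyl (esym hab))).
have [_ [k H]] := NG hc hm hs (ex_intro _ L (tau_G tl nab')).
exists (maxn k L) => M hM w.
have [_ h2] := H M (leq_trans (leq_maxl _ _) hM).
by rewrite -(tau_S tl nab') ?h2 // (leq_trans (leq_maxr _ _) hM).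
Qed.

Lemma pos_up n (v : Vt n) M : n <= M -> (forall w : Vt M, 0 < npaths v w) ->
  forall M', M <= M' -> forall w : Vt M', 0 < npaths v w.
Proof.
move=> hn h; elim=> [|M' IH] hM w.
  by move: hM; rewrite leqn0 => /eqP e; subst M.
case: (ltngtP M M'.+1) => h1.
- case: (rng_onto w) => e he.
  rewrite npathsS; last by apply: leq_trans hn h1.
  by rewrite (bigD1 e) /= ?he ?eqxx // ltn_addr // IH.
- by move: hM; rewrite leqNgt h1.
- by subst M.
Qed.

Lemma bad_up n (v : Vt n) M (r : Vt M) M' : M <= M' -> n <= M' ->
  (forall w' : Vt M', ~ (0 < npaths r w' /\ npaths v w' = 0)) ->
  forall M'', M' <= M'' -> forall w' : Vt M'', ~ (0 < npaths r w' /\ npaths v w' = 0).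
Proof.
move=> h1 h2 hb; elim=> [|M'' IH] hM w'.
  by move: hM; rewrite leqn0 => /eqP e; subst M'.
case: (ltngtP M' M''.+1) => h3.
- move=> [hp hz].
  have hMM : M <= M'' by apply: leq_trans h1 _.
  case: (npaths_last hMM hp) => e [he hp'].
  apply: (IH h3 (src e)); split => //.
  apply: npaths_zero; first by apply: leq_trans h2 _.
  by rewrite he.
- by move: hM; rewrite leqNgt h3.
- by subst M'; apply: hb.
Qed.

Lemma pos_eventually n (v : Vt n) :
  exists K, forall M, K <= M -> forall w : Vt M, 0 < npaths v w.
Proof.
apply: NNPP => hneg.
have hz : forall M, n <= M -> exists w : Vt M, npaths v w = 0.
  move=> M hM; apply: NNPP => h; apply: hneg; exists M.
  apply: pos_up => // w; rewrite lt0n; apply/eqP => e; apply: h; by exists w.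
pose Inf M (u : Vt M) := forall M', M <= M' -> n <= M' ->
  exists w' : Vt M', 0 < npaths u w' /\ npaths v w' = 0.
have [x hx] : exists x : P, forall M, Inf M (src (sval x M)).
  apply: construct.
    move=> v0 M' _ hM'; case: (hz M' hM') => w' hw'; exists w'; split => //.
    exact: npaths_v0.
  move=> M u hu; apply: NNPP => hno.
  have H : forall e : Et M, exists K, forall M', K <= M' -> src e = u -> M.+1 <= M' -> n <= M' ->
      forall w' : Vt M', ~ (0 < npaths (rng e) w' /\ npaths v w' = 0).
    move=> e; case: (classic (src e = u)) => he; last by exists 0.
    have : ~ Inf M.+1 (rng e) by move=> hi; apply: hno; exists e.
    move=> hi; apply: NNPP => hK; apply: hi => M' h1 h2; apply: NNPP => hw.
    apply: hK; exists M' => M'' hM'' _ _ _.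
    apply: (bad_up h1 h2) => // w' hw'; apply: hw; by exists w'.
  case: (fin_unif H) => K HK.
  pose M' := maxn K (maxn M.+1 n).
  have hK : K <= M' by rewrite leq_maxl.
  have h1 : M.+1 <= M' by rewrite (leq_trans _ (leq_maxr _ _)) // leq_maxl.
  have h2 : n <= M' by rewrite (leq_trans _ (leq_maxr _ _)) // leq_maxr.
  case: (hu M' (ltnW h1) h2) => w' [hp hzz].
  case: (npaths_first h1 hp) => e [he hp'].
  by apply: (HK e M' hK he h1 h2 w').
have hzero : forall M, n <= M -> npaths v (src (sval x M)) = 0.
  move=> M hM; case: (hx M M (leqnn _) hM) => w' [hp hzz].
  by rewrite (npaths_pos_same hp).
have hv : 0 < npaths v v by rewrite npaths_same eqxx.
case: (through2 (leqnn n) hv) => y [hy _].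
case: (hm x y n.+1) => g [[k G] cy].
pose M := maxn k n.
have GM : in_Gn M g by apply: Gn_mono G; rewrite leq_maxl.
have hnM : n <= M by rewrite leq_maxr.
have := npaths_path (g x) hnM.
by rewrite (Gsrc GM) (cy n) // hy hzero.
Qed.

Lemma two_pref_level : exists L1, forall L, L1 <= L -> forall w : Vt L,
  exists a b : P, src (sval a L) = w /\ src (sval b L) = w /\ ~ cyl L a b.
Proof.
case: hc => [[x1] iso].
case: (iso x1 0) => y [_ ny].
case: (diff_index ny) => i hi.
pose n0 := i.+1.
have hK : forall u : Vt n0, exists K, forall M, K <= M -> forall w : Vt M, 0 < npaths u w.
  by move=> u; apply: pos_eventually.
case: (fin_unif hK) => K HK.
exists (maxn K n0) => L hL w.
have hn0 : n0 <= L by apply: leq_trans hL; rewrite leq_maxr.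
have hKL : K <= L by apply: leq_trans hL; rewrite leq_maxl.
case: (through2 hn0 (HK (src (sval x1 n0)) L hKL w)) => z1 [h11 h12].
case: (through2 hn0 (HK (src (sval y n0)) L hKL w)) => z2 [h21 h22].
exists (mkspl n0 x1 z1), (mkspl n0 y z2).
split; first by rewrite mkspl_tail ?h11.
split; first by rewrite mkspl_tail ?h21.
move=> h; have h' : cyl n0 (mkspl n0 x1 z1) (mkspl n0 y z2) by apply: cyl_le h.
apply: hi.
have c1 := mkspl_cyl (esym h11); have c2 := mkspl_cyl (esym h21).
by rewrite -(c1 i) // -(h' i) // (c2 i).
Qed.

Lemma even_eventually n (v : Vt n) :
  exists K, forall M, K <= M -> forall w : Vt M, ~~ odd (npaths v w).
Proof.
case: two_pref_level => L1 HL.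
pose L := maxn L1 n.
have hL : L1 <= L by rewrite leq_maxl.
have hnL : n <= L by rewrite leq_maxr.
have H : forall u : Vt L, exists K, forall M, K <= M -> forall w : Vt M, ~~ odd (npaths u w).
  move=> u; case: (HL L hL u) => a [b [ha [hb nab]]].
  case: (even_two (etrans ha (esym hb)) nab) => K HK.
  by exists K; rewrite -ha.
case: (fin_unif H) => K HK.
exists (maxn K L) => M hM w.
rewrite (npaths_comp v w hnL (leq_trans (leq_maxr _ _) hM)).
rewrite (big_morph odd oddD (erefl : odd 0 = false)) big1 // => u _.
rewrite oddM; apply/andP => [[_ ho]].
by move: (HK u M (leq_trans (leq_maxl _ _) hM) w); rewrite ho.
Qed.

End B6.

Theorem mainTheorem4 (B : bratteli) :
  cantor_path_space B -> G_minimal B -> G_simple_nontrivial B ->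
  telescopable_even B.
Proof.
move=> hc hm hs.
pose Good n M := forall (v : V B n) (w : V B M), 2 <= npaths v w /\ ~~ odd (npaths v w).
have hG : forall n, exists M, n < M /\ Good n M.
  move=> n.
  have H : forall v : V B n, exists K, forall M, K <= M ->
      forall w : V B M, 0 < npaths v w /\ ~~ odd (npaths v w).
    move=> v; case: (pos_eventually hm v) => K1 H1.
    case: (even_eventually hc hm hs v) => K2 H2.
    exists (maxn K1 K2) => M hM w; split.
      by apply: H1; apply: leq_trans hM; rewrite leq_maxl.
    by apply: H2; apply: leq_trans hM; rewrite leq_maxr.
  case: (fin_unif H) => K HK.
  exists (maxn K n.+1); split; first by rewrite leq_maxr.
  move=> v w; have [h1 h2] := HK v _ (leq_maxl _ _) w; split => //.
  by move: h1 h2; case: (npaths v w) => [|[|p]].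
pose f n := proj1_sig (constructive_indefinite_description _ (hG n)).
have hf : forall n, n < f n /\ Good n (f n).
  move=> n; exact: (proj2_sig (constructive_indefinite_description _ (hG n))).
exists (fun i => iter i f 0); split => //.
  by move=> i; exact: (proj1 (hf _)).
by move=> i v w; exact: (proj2 (hf _) v w).
Qed.
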